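(* Let $\mathcal{L}\subseteq\{0,1\}^n$ be a nonempty lattice (closed under coordinatewise minimum and maximum) and let $d_{\mathcal{L}}(x)=\min_{y\in\mathcal{L}}\|x-y\|_1$. Define $f:\{0,1\}^{n+2}\to\mathbb{R}$, writing arguments as $(a,b,x)$ with $a,b\in\{0,1\}$, $x\in\{0,1\}^n$, by $f(0,0,x)=\|x\|_1$, $f(1,1,x)=1-\|x\|_1$, and $f(0,1,x)=f(1,0,x)=d_{\mathcal{L}}(x)$. Then $f$ has exactly $|\mathcal{L}|$ violated squares, namely the squares $\{(0,0,x),(0,1,x),(1,0,x),(1,1,x)\}$ for $x\in\mathcal{L}$.
   Context: A square in $\{0,1\}^m$ is a set $\{z, z+\mathbf{e}_i, z+\mathbf{e}_j, z+\mathbf{e}_i+\mathbf{e}_j\}$ with $i\neq j$, $z_i=z_j=0$, where $\mathbf{e}_i$ is the $i$-th standard basis vector; it is violated (for $f$) if $f(z)+f(z+\mathbf{e}_i+\mathbf{e}_j) > f(z+\mathbf{e}_i)+f(z+\mathbf{e}_j)$. *)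

(* Defs.v *)
From HB Require Import structures.
From mathcomp Require Import all_boot all_order all_algebra.
Set Implicit Arguments. Unset Strict Implicit. Unset Printing Implicit Defensive.
Import Order.TTheory GRing.Theory Num.Theory.

(* The hypercube {0,1}^m: points are boolean functions on 'I_m (true = 1). *)
Definition cube (m : nat) := {ffun 'I_m -> bool}.

(* z + e_i, used only when z_i = 0: set coordinate i to 1. *)
Definition addE m (z : cube m) (i : 'I_m) : cube m :=
  [ffun k => (k == i) || z k].

Definition square m (z : cube m) (i j : 'I_m) : {set cube m} :=
  [set z; addE z i; addE z j; addE (addE z i) j].

Definition violated_squares (R : realFieldType) m (f : cube m -> R)
  : {set {set cube m}} :=
  [set S : {set cube m} | [exists z : cube m, exists i : 'I_m, exists j : 'I_m,
     [&& i != j, ~~ z i, ~~ z j,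
         (f (addE z i) + f (addE z j) < f z + f (addE (addE z i) j))%R
       & S == square z i j]]].

Definition norm1 m (x : cube m) : nat := #|[set k | x k]|.
Definition dist1 m (x y : cube m) : nat := #|[set k | x k != y k]|.

(* d_L(x) = min_{y in L} ||x - y||_1  (the neutral element m is an upper
   bound of all distances, so for nonempty L this is exactly the minimum). *)
Definition distL m (L : {set cube m}) (x : cube m) : nat :=
  \big[minn/m]_(y in L) dist1 x y.

Definition cmin m (x y : cube m) : cube m := [ffun k => x k && y k].
Definition cmax m (x y : cube m) : cube m := [ffun k => x k || y k].
Definition is_lattice m (L : {set cube m}) : Prop :=
  forall x y, x \in L -> y \in L -> cmin x y \in L /\ cmax x y \in L.

(* The point (a, b, x) of {0,1}^(n+2): coordinate 0 is a, 1 is b, and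
   coordinate k+2 is x_k. *)
Definition mkpt n (a b : bool) (x : cube n) : cube n.+2 :=
  [ffun k : 'I_n.+2 => if val k == 0%N then a else if val k == 1%N then b
     else match (insub (val k - 2)%N : option 'I_n) with
          | Some j => x j | None => false end].

Definition tailpt n (y : cube n.+2) : cube n :=
  [ffun k : 'I_n => y (lift ord0 (lift ord0 k))].

Definition f_L (R : realFieldType) n (L : {set cube n}) (y : cube n.+2) : R :=
  let x := tailpt y in
  match y ord0, y (lift ord0 ord0) with
  | false, false => ((norm1 x)%:R)%R
  | true, true => (1 - (norm1 x)%:R)%R
  | _, _ => ((distL L x)%:R)%R
  end.

(* Main.v *)
Set Warnings "-notation-overridden,-ambiguous-paths".
Require Import Defs.
From HB Require Import structures.
From mathcomp Require Import all_boot all_order all_algebra.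
From mathcomp Require Import lra.
Import Order.TTheory GRing.Theory Num.Theory.
Set Implicit Arguments. Unset Strict Implicit.

Lemma ordS2P n (k : 'I_n.+2) :
  k = ord0 \/ k = lift ord0 ord0 \/ exists k', k = lift ord0 (lift ord0 k').
Proof.
case: (unliftP ord0 k) => [k1 ->|->]; last by left.
case: (unliftP ord0 k1) => [k2 ->|->]; right; [right; by exists k2 | by left].
Qed.

Lemma mkpt0 n a b (x : cube n) : mkpt a b x ord0 = a.
Proof. by rewrite ffunE. Qed.
Lemma mkpt1 n a b (x : cube n) : mkpt a b x (lift ord0 ord0) = b.
Proof. by rewrite ffunE. Qed.
Lemma mkpt2 n a b (x : cube n) k : mkpt a b x (lift ord0 (lift ord0 k)) = x k.
Proof.
rewrite ffunE /=.
rewrite /bump !leq0n !add1n !subSS subn0.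
case: insubP => [j _ hj|]; last by rewrite (ltn_ord k).
by congr (x _); apply: val_inj.
Qed.
Lemma tailK n a b (x : cube n) : tailpt (mkpt a b x) = x.
Proof. by apply/ffunP => k; rewrite ffunE mkpt2. Qed.
Lemma mkpt_ex n (z : cube n.+2) : exists a b x, z = mkpt a b x.
Proof.
exists (z ord0), (z (lift ord0 ord0)), (tailpt z).
apply/ffunP => c; move: (ordS2P c) => [->|[->|[c' ->]]];
 by rewrite ?mkpt0 ?mkpt1 ?mkpt2 // ffunE.
Qed.
Lemma mkpt_inj n a b a' b' (x y : cube n) : mkpt a b x = mkpt a' b' y ->
  [/\ a = a', b = b' & x = y].
Proof.
move=> E; split; first by rewrite -(mkpt0 a b x) E mkpt0.
  by rewrite -(mkpt1 a b x) E mkpt1.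
by rewrite -(tailK a b x) E tailK.
Qed.

Lemma addE0 n a b (x : cube n) : addE (mkpt a b x) ord0 = mkpt true b x.
Proof.
apply/ffunP => c; rewrite /addE ffunE.
move: (ordS2P c) => [->|[->|[c' ->]]]; by rewrite ?mkpt0 ?mkpt1 ?mkpt2.
Qed.
Lemma addE1 n a b (x : cube n) : addE (mkpt a b x) (lift ord0 ord0) = mkpt a true x.
Proof.
apply/ffunP => c; rewrite /addE ffunE.
move: (ordS2P c) => [->|[->|[c' ->]]];
  by rewrite ?mkpt0 ?mkpt1 ?mkpt2 ?(inj_eq (@lift_inj _ ord0)) ?ffunE.
Qed.
Lemma addE2 n a b (x : cube n) k :
  addE (mkpt a b x) (lift ord0 (lift ord0 k)) = mkpt a b (addE x k).
Proof.
apply/ffunP => c; rewrite /addE ffunE.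
move: (ordS2P c) => [->|[->|[c' ->]]];
  by rewrite ?mkpt0 ?mkpt1 ?mkpt2 ?(inj_eq (@lift_inj _ ord0)) ?ffunE.
Qed.

Lemma bigmin_le (T : finType) (A : {pred T}) (F : T -> nat) m y :
  y \in A -> \big[minn/m]_(i in A) F i <= F y.
Proof.
move=> yA; have: y \in index_enum T by rewrite mem_index_enum.
elim: (index_enum T) => [|c s IH] //; rewrite big_cons inE.
case/orP => [/eqP <-|/IH h]; first by rewrite yA geq_minl.
by case: ifP => // _; rewrite geq_min h orbT.
Qed.

Lemma bigmin_attain (T : finType) (A : {pred T}) (F : T -> nat) m y0 :
  y0 \in A -> (forall y, F y <= m) ->
  exists2 y, y \in A & \big[minn/m]_(i in A) F i = F y.
Proof.
move=> y0A Fm.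
have : \big[minn/m]_(i in A) F i = m \/ exists2 y, y \in A & \big[minn/m]_(i in A) F i = F y.
  elim: (index_enum T) => [|c s IH]; rewrite ?big_nil ?big_cons; first by left.
  case: ifP => Ac; last exact: IH; right.
  case: IH => [->|[y Ay ->]]; first by exists c => //; rewrite (minn_idPl (Fm c)).
  case: (leqP (F c) (F y)) => h; first by exists c => //; rewrite (minn_idPl h).
  by exists y => //; rewrite (minn_idPr (ltnW h)).
case=> // E; exists y0 => //; apply/eqP; by rewrite eqn_leq bigmin_le // E Fm.
Qed.

Lemma card_sum n (P : pred 'I_n) : #|[set k | P k]| = \sum_k (P k : nat).
Proof.
rewrite -sum1_card big_mkcond /=; apply: eq_bigr => k _; rewrite inE.
by case: (P k).
Qed.

Lemma dist_le n (x y : cube n) : dist1 x y <= n.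
Proof. by rewrite /dist1 (leq_trans (max_card _)) // card_ord. Qed.

Lemma dist_sub n (u v y1 y2 : cube n) :
  dist1 (cmin u v) (cmin y1 y2) + dist1 (cmax u v) (cmax y1 y2)
  <= dist1 u y1 + dist1 v y2.
Proof.
rewrite /dist1 !card_sum -!big_split /=; apply: leq_sum => k _; rewrite !ffunE.
by case: (u k); case: (v k); case: (y1 k); case: (y2 k).
Qed.

Lemma dist_tri n (x x' y : cube n) : dist1 x' y <= dist1 x' x + dist1 x y.
Proof.
rewrite /dist1 !card_sum -!big_split /=; apply: leq_sum => k _.
by case: (x k); case: (x' k); case: (y k).
Qed.

Lemma dist_addE n (x : cube n) k : dist1 x (addE x k) <= 1.
Proof.
rewrite /dist1 -(cards1 k); apply: subset_leq_card; apply/subsetP => c.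
by rewrite !inE ffunE; case: (c == k) => //=; rewrite eqxx.
Qed.

Lemma dist_sym n (x y : cube n) : dist1 x y = dist1 y x.
Proof. by rewrite /dist1; apply: eq_card => c; rewrite !inE eq_sym. Qed.

Section D.
Variables (n : nat) (L : {set cube n}).
Hypotheses (hne : L != set0) (hlat : is_lattice L).

Lemma distL_le x y : y \in L -> distL L x <= dist1 x y.
Proof. exact: bigmin_le. Qed.

Lemma distL_at x : exists2 y, y \in L & distL L x = dist1 x y.
Proof.
case/set0Pn: hne => y0 y0L.
rewrite /distL; apply: bigmin_attain y0L _ => y; exact: dist_le.
Qed.

Lemma distL0 x : distL L x = 0 -> x \in L.
Proof.
case: (distL_at x) => y yL -> /eqP; rewrite cards_eq0 => /eqP E.
suff -> : x = y by [].
apply/ffunP => c; apply/eqP; apply/negPn/negP => h.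
by have := in_set0 c; rewrite -E inE h.
Qed.

Lemma distL_in x : x \in L -> distL L x = 0.
Proof.
move=> xL; apply/eqP; rewrite -leqn0 (leq_trans (distL_le x xL)) //.
by rewrite /dist1 leqn0 cards_eq0; apply/eqP/setP => c; rewrite !inE eqxx.
Qed.

Lemma distL_lip x x' : dist1 x' x <= 1 -> distL L x' <= distL L x + 1.
Proof.
move=> h; case: (distL_at x) => y yL ->.
rewrite (leq_trans (distL_le x' yL)) // (leq_trans (dist_tri x x' y)) //.
by rewrite addnC leq_add2l.
Qed.

Lemma distL_sub u v : distL L (cmin u v) + distL L (cmax u v) <= distL L u + distL L v.
Proof.
case: (distL_at u) => y1 y1L ->; case: (distL_at v) => y2 y2L ->.
case: (hlat y1L y2L) => m1 m2.
apply: leq_trans (dist_sub u v y1 y2).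
by apply: leq_add; apply: distL_le.
Qed.
End D.

Lemma norm_addE n (x : cube n) k : ~~ x k -> norm1 (addE x k) = (norm1 x).+1.
Proof.
move=> h; rewrite /norm1.
have -> : [set c | addE x k c] = k |: [set c | x c].
  by apply/setP => c; rewrite !inE ffunE.
by rewrite cardsU1 inE (negbTE h).
Qed.

Lemma cmin_addE n (x : cube n) k l : k != l -> ~~ x k -> ~~ x l ->
  cmin (addE x k) (addE x l) = x.
Proof.
move=> kl xk xl; apply/ffunP => c; rewrite !ffunE.
case: (eqVneq c k) => [->|ck]; first by rewrite (negbTE kl) (negbTE xk).
case: (eqVneq c l) => [->|cl] /=; first by rewrite (negbTE xl).
by rewrite andbb.
Qed.

Lemma cmax_addE n (x : cube n) k l : cmax (addE x k) (addE x l) = addE (addE x k) l.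
Proof.
apply/ffunP => c; rewrite !ffunE.
by case: (c == k); case: (c == l); case: (x c).
Qed.

Definition sq4 n (x : cube n) : {set cube n.+2} :=
  [set mkpt false false x; mkpt false true x; mkpt true false x; mkpt true true x].

Section Main.
Variables (R : realFieldType) (n : nat) (L : {set cube n}).
Hypotheses (hne : L != set0) (hlat : is_lattice L).
Local Open Scope ring_scope.

Lemma lipR (x : cube n) k : ~~ x k ->
  [/\ (distL L (addE x k))%:R <= (distL L x)%:R + 1 :> R,
      (distL L x)%:R <= (distL L (addE x k))%:R + 1 :> R
    & (norm1 (addE x k))%:R = (norm1 x)%:R + 1 :> R].
Proof.
move=> xk; split.
- by rewrite natr1 ler_nat -addn1; apply: distL_lip => //; rewrite dist_sym dist_addE.
- by rewrite natr1 ler_nat -addn1; apply: distL_lip => //; rewrite dist_addE.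
- by rewrite norm_addE // natr1.
Qed.

Lemma subR (x : cube n) k l : k != l -> ~~ x k -> ~~ x l ->
  (distL L x)%:R + (distL L (addE (addE x k) l))%:R
    <= (distL L (addE x k))%:R + (distL L (addE x l))%:R :> R.
Proof.
move=> kl xk xl; rewrite -!natrD ler_nat.
by rewrite -{1}(cmin_addE kl xk xl) -cmax_addE distL_sub.
Qed.

Lemma viol_sq (z : cube n.+2) i j : i != j -> ~~ z i -> ~~ z j ->
  f_L R L (addE z i) + f_L R L (addE z j) < f_L R L z + f_L R L (addE (addE z i) j) ->
  exists2 x, x \in L & square z i j = sq4 x.
Proof.
case: (mkpt_ex z) => a [b [x ->]].
case: (ordS2P i) => [->|[->|[k ->]]]; case: (ordS2P j) => [->|[->|[l ->]]];
do 2 rewrite ?addE0 ?addE1 ?addE2; rewrite ?mkpt0 ?mkpt1 ?mkpt2 ?eqxx //.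
all: rewrite /f_L !mkpt0 !mkpt1 !tailK.
- move=> _ /negbTE -> /negbTE -> /= H; exists x.
    apply: distL0 => //; case E: (distL L x) => [//|m]; exfalso.
    have : 1 <= (m.+1)%:R :> R by rewrite ler1n.
    move: H; rewrite E; lra.
  rewrite /square /sq4 addE0 addE1 addE1.
  apply/setP => w; rewrite !inE.
  by case: (w == mkpt false true x); case: (w == mkpt true false x); rewrite /= ?orbT ?orbF.
- move=> _ /negbTE -> xl; case: (lipR xl) => h1 h2 h3; rewrite h3.
  by case: b => /= H; exfalso; lra.
- move=> _ /negbTE -> /negbTE -> /= H; exists x.
    apply: distL0 => //; case E: (distL L x) => [//|m]; exfalso.
    have : 1 <= (m.+1)%:R :> R by rewrite ler1n.
    move: H; rewrite E; lra.
  by rewrite /square /sq4 addE0 addE1 addE0.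
- move=> _ /negbTE -> xl; case: (lipR xl) => h1 h2 h3; rewrite h3.
  by case: a => /= H; exfalso; lra.
- move=> _ xk /negbTE ->; case: (lipR xk) => h1 h2 h3; rewrite h3.
  by case: b => /= H; exfalso; lra.
- move=> _ xk /negbTE ->; case: (lipR xk) => h1 h2 h3; rewrite h3.
  by case: a => /= H; exfalso; lra.
- rewrite (inj_eq (@lift_inj _ ord0)) (inj_eq (@lift_inj _ ord0)) => kl xk xl.
  have xkl : ~~ addE x k l by rewrite ffunE negb_or eq_sym kl.
  case: (lipR xk) => h1 h2 h3; case: (lipR xl) => h4 h5 h6.
  case: (lipR xkl) => h7 h8 h9; have h10 := subR kl xk xl.
  by rewrite h9 h3 h6; case: a; case: b => /= H; exfalso; lra.
Qed.

Lemma sq4_viol x : x \in L -> sq4 x \in violated_squares (@f_L R n L).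
Proof.
move=> xL; rewrite inE; apply/existsP; exists (mkpt false false x).
apply/existsP; exists ord0; apply/existsP; exists (lift ord0 ord0).
rewrite !mkpt0 !mkpt1 addE0 !addE1 /f_L !mkpt0 !mkpt1 !tailK distL_in //=.
apply/andP; split; first lra.
apply/eqP; rewrite /square /sq4 addE0 addE1 addE1.
apply/setP => w; rewrite !inE.
by case: (w == mkpt false true x); case: (w == mkpt true false x); rewrite /= ?orbT ?orbF.
Qed.
End Main.

Unset Implicit Arguments.
Local Open Scope ring_scope.

Theorem lemma5 (R : realFieldType) (n : nat) (L : {set cube n})
  (hne : L != set0) (hlat : is_lattice L) :
  violated_squares (@f_L R n L) =
    [set [set mkpt false false x; mkpt false true x;
              mkpt true false x; mkpt true true x] | x in L]
  /\ #|violated_squares (@f_L R n L)| = #|L|.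
Proof.
have E : violated_squares (@f_L R n L) =
    [set [set mkpt false false x; mkpt false true x;
              mkpt true false x; mkpt true true x] | x in L].
  apply/setP => S; apply/idP/imsetP.
    rewrite inE => /existsP [z /existsP [i /existsP [j /and5P [ij zi zj H /eqP ->]]]].
    exact: (viol_sq hne hlat ij zi zj H).
  by case=> x xL ->; exact: sq4_viol.
split => //; rewrite E card_in_imset // => x y _ _ Exy.
have : mkpt false false x \in sq4 y by rewrite /sq4 -Exy !inE eqxx.
rewrite !inE; case/orP => [/orP [/orP [] |] |] /eqP /mkpt_inj [] //.
Qed.
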